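(* Let $Q_0$ be the unit cube in $\mathbb R^d$ and $f\in C(Q_0)$. There is $N_0=N_0(d)$ such that the following holds. Let $Q\subset Q_0$ be a cube partitioned into $K^d$ equal cubes $q_i$, $K\ge 8$, with $2q_i\subset Q_0$ for all $i$, and put $N_{\min}=\min_i N_f(q_i)$. If $N_{\min}\ge N_0(d)$, then \[N_f(Q/2)\ge \frac K8 N_{\min}.\]
   Context: For a cube $q$ and $t>0$, $tq$ is the concentric cube with side length multiplied by $t$. For a cube $q$ with $2q\subset Q_0$, $N_f(q)=\log\frac{\max_{2q}|f|}{\max_q|f|}$. *)

(* Defs.v *)
From HB Require Import structures.
From mathcomp Require Import all_boot all_order all_algebra.
From mathcomp Require Import all_classical all_reals all_analysis.
Set Implicit Arguments. Unset Strict Implicit. Unset Printing Implicit Defensive.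
Import Order.TTheory GRing.Theory Num.Theory.
Import numFieldNormedType.Exports.
Local Open Scope classical_set_scope.
Local Open Scope ring_scope.

Definition cube (R : realType) (d : nat) (c : 'rV[R]_d) (r : R) : set 'rV[R]_d :=
  [set x | forall i : 'I_d, `|x ord0 i - c ord0 i| <= r].

Definition Q0 {R : realType} (d : nat) : set 'rV[R]_d :=
  [set x | forall i : 'I_d, 0 <= x ord0 i <= 1].

(* max_A |f| (for continuous f on a compact cube this sup is a max). *)
Definition maxabs (R : realType) (d : nat) (f : 'rV[R]_d -> R) (A : set 'rV[R]_d) : R :=
  sup [set `|f x| | x in A].

Definition Nf (R : realType) (d : nat) (f : 'rV[R]_d -> R) (c : 'rV[R]_d) (r : R) : R :=
  ln (maxabs f (cube c (2 * r)) / maxabs f (cube c r)).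

(* Subcube j of the partition of the cube with lower corner a and side s into
   K^d equal cubes: center a + (2 j + 1) s/(2K), half-side s/(2K). *)
Definition subcenter (R : realType) (d K : nat) (a : 'rV[R]_d) (s : R)
  (j : {ffun 'I_d -> 'I_K}) : 'rV[R]_d :=
  \row_i (a ord0 i + ((2 * (j i : nat)).+1)%:R * s / (2 * K%:R)).

(* Main.v *)
Require Import Defs.
From HB Require Import structures.
From mathcomp Require Import all_boot all_order all_algebra.
From mathcomp Require Import all_classical all_reals all_analysis.
From mathcomp Require Import ring lra zify.
Import Order.TTheory GRing.Theory Num.Theory.
Import numFieldNormedType.Exports.
Local Open Scope classical_set_scope.
Local Open Scope ring_scope.

Lemma Q0_bnd (R : realType) (d : nat) (f : 'rV[R]_d -> R) :
  {within @Q0 R d, continuous f} -> exists M, forall x, @Q0 R d x -> `|f x| <= M.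
Proof.
move=> fc.
have cQ : compact (@Q0 R d).
  have -> : @Q0 R d = [set v : 'rV[R]_d | forall i, (fun=> `[(0:R), 1]%classic) i (v ord0 i)].
    by apply/seteqP; split => x /= H i; move: (H i); rewrite /= in_itv.
  by apply: (@rV_compact R^o d (fun=> `[(0:R), 1]%classic)) => i; exact: segment_compact.
have cf := continuous_compact fc cQ.
have := @compact_bounded R R^o _ cf.
case=> M [_ HM].
exists (M + 1) => x Qx.
have := HM (M+1); rewrite ltrDl ltr01 => /(_ isT) H.
by apply: H; exists x.
Qed.

Lemma maxabs_ub (R : realType) (d : nat) (f : 'rV[R]_d -> R) (B : set 'rV[R]_d) :
  {within @Q0 R d, continuous f} -> B `<=` @Q0 R d -> forall x, B x -> `|f x| <= maxabs f B.
Proof.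
move=> fc BQ x Bx; have [M HM] := @Q0_bnd _ _ _ fc.
apply: sup_upper_bound; last by exists x.
split; first by exists `|f x|, x.
by exists M => _ [y By <-]; apply: HM; apply: BQ.
Qed.

Lemma maxabs_le (R : realType) (d : nat) (f : 'rV[R]_d -> R) (A : set 'rV[R]_d) y :
  A !=set0 -> (forall x, A x -> `|f x| <= y) -> maxabs f A <= y.
Proof.
move=> [x Ax] H; apply: ge_sup; first by exists `|f x|, x.
by move=> _ [z Az <-]; apply: H.
Qed.
Lemma cov1 (R : realType) (h t : R) (n : nat) : 0 < h -> forall lo : nat,
  2 * lo%:R * h <= t <= 2 * (lo + n + 1)%:R * h ->
  exists k : nat, (lo <= k <= lo + n)%N /\ `|t - (2 * k%:R + 1) * h| <= h.
Proof.
move=> h0; elim: n => [|n IH] lo /andP[t1 t2].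
  exists lo; rewrite addn0 leqnn; split => //.
  rewrite ler_norml; move: t2; rewrite addn0 natrD => t2; apply/andP; split; lra.
have [tl|tl] := lerP t (2 * (lo + 1)%:R * h).
  exists lo; rewrite leqnn leq_addr; split => //.
  rewrite ler_norml; move: tl; rewrite natrD => tl; apply/andP; split; lra.
case: (IH lo.+1) => [|k [/andP[k1 k2] Hk]].
  have -> : (lo.+1 + n + 1 = lo + n.+1 + 1)%N by lia.
  by rewrite t2 andbT -[lo.+1]addn1 (ltW tl).
exists k; split => //; apply/andP; split; lia.
Qed.

Lemma subc (R : realType) d K (a : 'rV[R]_d) s (j : {ffun 'I_d -> 'I_K}) i :
  (0 < K)%N ->
  subcenter a s j ord0 i = a ord0 i + (2 * (j i : nat)%:R + 1) * (s / (2 * K%:R)).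
Proof.
move=> K0; rewrite /subcenter mxE; congr (_ + _).
by rewrite -addn1 natrD natrM mulrA.
Qed.

Lemma cover (R : realType) d K (a x : 'rV[R]_d) s (lo hi : 'I_d -> nat) :
  0 < s -> (0 < K)%N -> (forall i, lo i <= hi i < K)%N ->
  (forall i, 2 * (lo i)%:R * (s / (2 * K%:R)) <= x ord0 i - a ord0 i
              <= 2 * (hi i + 1)%:R * (s / (2 * K%:R))) ->
  exists j : {ffun 'I_d -> 'I_K}, (forall i, lo i <= j i <= hi i)%N /\
     cube (subcenter a s j) (s / (2 * K%:R)) x.
Proof.
move=> s0 K0 lh H.
have h0 : 0 < s / (2 * K%:R) by rewrite divr_gt0 // mulr_gt0 // ltr0n.
have : forall i, exists k : 'I_K, (lo i <= k <= hi i)%N /\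
   `|x ord0 i - subcenter a s [ffun=> k] ord0 i| <= s / (2 * K%:R).
  move=> i; have /andP[l1 l2] := lh i.
  case: (@cov1 _ _ (x ord0 i - a ord0 i) (hi i - lo i) h0 (lo i)) => [|k [/andP[k1 k2] Hk]].
    by rewrite subnKC // -addnA addn1 subnKC.
  have kK : (k < K)%N by rewrite (leq_ltn_trans _ l2) // -(subnKC l1).
  exists (Ordinal kK); rewrite k1 /=; split; first by rewrite (subnKC l1) in k2.
  rewrite subc // ffunE /=; move: Hk; congr (_ <= _); congr `|_|; ring.
case/fin_all_exists => g Hg; exists [ffun i => g i]; split.
  by move=> i; rewrite ffunE; case: (Hg i).
move=> i; case: (Hg i) => _; congr (`|_ - _| <= _).
by rewrite !subc // !ffunE.
Qed.

Theorem lemma4p1 (R : realType) (d : nat) :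
  exists N0 : R,
  forall (f : 'rV[R]_d -> R), {within @Q0 R d, continuous f} ->
  forall (a : 'rV[R]_d) (s : R) (K : nat) (Nmin : R),
    0 < s ->
    (8 <= K)%N ->
    (* Q = cube with lower corner a and side s, contained in Q0 *)
    cube (\row_i (a ord0 i + s / 2)) (s / 2) `<=` @Q0 R d ->
    (* 2 q_j is contained in Q0 for every subcube q_j *)
    (forall j : {ffun 'I_d -> 'I_K},
        cube (subcenter a s j) (2 * (s / (2 * K%:R))) `<=` @Q0 R d) ->
    (* N_f(q_j) is well defined: max_{q_j} |f| > 0 *)
    (forall j : {ffun 'I_d -> 'I_K},
        0 < maxabs f (cube (subcenter a s j) (s / (2 * K%:R)))) ->
    (* Nmin = min_j N_f(q_j) *)
    (exists j : {ffun 'I_d -> 'I_K}, Nmin = Nf f (subcenter a s j) (s / (2 * K%:R))) ->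
    (forall j : {ffun 'I_d -> 'I_K}, Nmin <= Nf f (subcenter a s j) (s / (2 * K%:R))) ->
    N0 <= Nmin ->
    (* N_f(Q/2) >= K/8 * Nmin *)
    K%:R / 8 * Nmin <= Nf f (\row_i (a ord0 i + s / 2)) (s / 4).
Proof.
exists 0 => f fc a s K N s0 K8 QQ0 Q2 mpos _ Nle N0.
have K0 : (0 < K)%N by apply: leq_trans K8.
have Kr : 0 < K%:R :> R by rewrite ltr0n.
have hK : 2 * K%:R * (s / (2 * K%:R)) = s by field; rewrite pnatr_eq0 -lt0n.
set h := s / (2 * K%:R) in Q2 mpos Nle hK *.
have h0 : 0 < h by rewrite /h divr_gt0 // mulr_gt0.
pose m (j : {ffun 'I_d -> 'I_K}) := maxabs f (cube (subcenter a s j) h).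
have cube_mono : forall (c : 'rV[R]_d) r r', r <= r' -> cube c r `<=` cube c r'.
  by move=> c r r' rr x Hx i; apply: le_trans (Hx i) rr.
have cube_ne : forall (c : 'rV[R]_d) r, 0 <= r -> cube c r !=set0.
  by move=> c r r0; exists c => i; rewrite subrr normr0.
have cjQ : forall j : {ffun 'I_d -> 'I_K}, cube (subcenter a s j) h `<=` @Q0 R d.
  move=> j x Hx; apply: (Q2 j x); apply: (cube_mono _ h (2 * h)) Hx; lra.
have mono : forall A B : set 'rV[R]_d, A !=set0 -> A `<=` B -> B `<=` @Q0 R d ->
    maxabs f A <= maxabs f B.
  move=> A B An AB BQ; apply: maxabs_le => // x Ax.
  by apply: maxabs_ub => //; apply: AB.
have G : forall (P : pred {ffun 'I_d -> 'I_K}) (A : set 'rV[R]_d), A !=set0 ->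
    (forall x, A x -> exists j, P j /\ cube (subcenter a s j) h x) ->
    exists j, P j /\ maxabs f A <= m j.
  move=> P A [x Ax] HA; have [j1 [Pj1 _]] := HA x Ax.
  case: (@arg_maxP _ _ _ j1 P m Pj1) => jm Pjm Hmax.
  exists jm; split => //; apply: maxabs_le; first by exists x.
  move=> y Ay; have [j [Pj cy]] := HA y Ay.
  apply: (le_trans (@maxabs_ub _ _ _ _ fc (cjQ j) _ cy)); exact: Hmax j Pj.
have Step : forall j : {ffun 'I_d -> 'I_K}, (forall i, 1 <= j i /\ j i + 1 < K)%N ->
    exists j' : {ffun 'I_d -> 'I_K},
      (forall i, j i <= j' i + 1 /\ j' i <= j i + 1)%N /\ expR N * m j <= m j'.
  move=> j Hj.
  pose P := [pred j' : {ffun 'I_d -> 'I_K} |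
      [forall i, (j i <= j' i + 1)%N && (j' i <= j i + 1)%N]].
  have cov : forall x, cube (subcenter a s j) (2 * h) x ->
      exists j', P j' /\ cube (subcenter a s j') h x.
    move=> x Hx.
    case: (@cover R d K a x s (fun i => j i - 1)%N (fun i => j i + 1)%N s0 K0) => [i|i|j' [Hl Hc]].
    - have [? ?] := Hj i; apply/andP; split; lia.
    - have := Hx i; rewrite subc // ler_norml; have [? ?] := Hj i.
      rewrite natrB // !natrD -/h => /andP[x1 x2]; apply/andP; split; lra.
    - exists j'; split => //; apply/forallP => i; have := Hl i; move=> /andP[? ?].
      apply/andP; split; lia.
  have [j' [Pj' Hj']] := G P _ (cube_ne _ _ (ltW (mulr_gt0 (ltr0Sn _ 1) h0))) cov.
  exists j'; split.
    move=> i; move/forallP: Pj' => /(_ i) /andP[? ?]; split; lia.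
  apply: le_trans Hj'.
  have mj := mpos j.
  have mB : m j <= maxabs f (cube (subcenter a s j) (2 * h)).
    apply: mono; first exact: cube_ne (ltW h0).
      apply: cube_mono; lra.
    exact: Q2.
  rewrite -ler_pdivlMr //.
  have := Nle j; rewrite /Nf -/h => HN.
  have rp : 0 < maxabs f (cube (subcenter a s j) (2 * h)) / m j.
    by rewrite divr_gt0 //; apply: lt_le_trans mB.
  by rewrite -(lnK (x := _ / _)) ?posrE // ler_expR.
set ctr := \row_i (a ord0 i + s / 2).
have ctrE : forall i, ctr ord0 i = a ord0 i + s / 2 by move=> i; rewrite mxE.
pose D := (K %/ 4)%N.
pose M := maxabs f (cube ctr (s / 4)).
have cQ : forall x, cube ctr (s / 2) x -> @Q0 R d x by move=> x; apply: QQ0.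
have Chain : forall n, (n <= D)%N -> exists j : {ffun 'I_d -> 'I_K},
    (forall i, D - n <= j i /\ j i + (D - n) < K)%N /\ expR (n%:R * N) * M <= m j.
  elim => [_|n IH nD].
    pose P := [pred j : {ffun 'I_d -> 'I_K} | [forall i, (D <= j i)%N && (j i + D < K)%N]].
    have cov : forall x, cube ctr (s / 4) x -> exists j, P j /\ cube (subcenter a s j) h x.
      move=> x Hx.
      case: (@cover R d K a x s (fun=> D) (fun=> K - 1 - D)%N s0 K0) => [i|i|j [Hl Hc]].
      - apply/andP; split; lia.
      - have := Hx i; rewrite ctrE ler_norml.
        have -> : (K - 1 - D + 1 = K - D)%N by lia.
        have DK : (D <= K)%N by lia.
        have D4 : 4 * D%:R <= K%:R :> R by rewrite -natrM ler_nat; lia.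
        rewrite natrB // -/h => /andP[x1 x2]; apply/andP; split; nra.
      - exists j; split => //; apply/forallP => i; have := Hl i; move=> /andP[? ?].
        apply/andP; split; lia.
    have [j [Pj Hj]] := G P _ (cube_ne _ _ (ltW (divr_gt0 s0 (ltr0Sn _ 3)))) cov.
    exists j; split; last by rewrite mul0r expR0 mul1r.
    by move=> i; move/forallP: Pj => /(_ i) /andP[? ?]; split; lia.
  have [j [Hj Hm]] := IH (ltnW nD).
  have [j' [Hj' Hm']] := Step j (fun i => match Hj i with conj p q => conj (leq_trans (ltac:(lia) : (1 <= D - n)%N) p) (ltac:(lia) : (j i + 1 < K)%N) end).
  exists j'; split.
    by move=> i; have [? ?] := Hj i; have [? ?] := Hj' i; split; lia.
  apply: le_trans Hm'; rewrite -nat1r mulrDl mul1r expRD -mulrA.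
  by rewrite ler_pM2l ?expR_gt0.
have [jf [_ Hf]] := Chain D (leqnn D).
pose c := ((K + 3) %/ 4)%N.
have cK : (c < K)%N by lia.
pose j0 : {ffun 'I_d -> 'I_K} := [ffun=> Ordinal cK].
have Mpos : 0 < M.
  apply: (lt_le_trans (mpos j0)); apply: mono.
  - exact: cube_ne (ltW h0).
  - move=> x Hx i; have := Hx i; rewrite subc // ffunE /= ctrE !ler_norml -/h.
    have c1 : K%:R <= 4 * c%:R :> R by rewrite -natrM ler_nat; lia.
    have c2 : 4 * c%:R + 4 <= 3 * K%:R :> R by rewrite -natrM -natrM -natrD ler_nat; lia.
    move=> /andP[x1 x2]; apply/andP; split; nra.
  - by move=> x Hx; apply: cQ; apply: (cube_mono _ (s/4)) Hx; lra.
have MQ : m jf <= maxabs f (cube ctr (2 * (s / 4))).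
  apply: mono.
  - exact: cube_ne (ltW h0).
  - move=> x Hx i; have := Hx i; rewrite subc // ctrE !ler_norml -/h.
    have c1 : (jf i)%:R + 1 <= K%:R :> R by rewrite natr1 ler_nat.
    have c0 : 0 <= (jf i)%:R :> R by [].
    move=> /andP[x1 x2]; apply/andP; split; nra.
  - by move=> x Hx; apply: cQ; apply: (cube_mono _ (2 * (s/4))) Hx; lra.
rewrite /Nf -/M.
have eM : expR (D%:R * N) <= maxabs f (cube ctr (2 * (s / 4))) / M.
  by rewrite ler_pdivlMr //; apply: le_trans MQ.
have rp : 0 < maxabs f (cube ctr (2 * (s / 4))) / M by apply: lt_le_trans eM; exact: expR_gt0.
apply: (le_trans _ (_ : ln (expR (D%:R * N)) <= _)).
  rewrite expRK; apply: ler_wpM2r => //.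
  rewrite ler_pdivrMr // -natrM ler_nat; lia.
by rewrite ler_ln ?posrE ?expR_gt0.
Qed.
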